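(* Let $(\mathcal B,<)$ be a monoidal poset, $B\in\mathcal B$, and $i\ne k$ nodes with $r_iB=r_kB>B$. If $\beta$ is an element of $B$ of smallest height among the elements of $B$ moved by $r_i$ or $r_k$, then $\beta+\alpha_i+\alpha_k\in B$. Furthermore $i\not\sim k$.
   Context: Setting: $M$ is a spherical simply laced Coxeter diagram with nodes $1,\dots,n$ ($i\sim j$: distinct adjacent nodes; $i\not\sim j$ otherwise); $W$ its Weyl group with positive roots $\Phi^+$, fundamental roots $\alpha_i$, reflections $r_i$, inner product with $(\alpha_i,\alpha_i)=2$, $(\alpha_i,\alpha_j)=-1$ if $i\sim j$, $0$ otherwise; height $\mathrm{ht}(\sum a_k\alpha_k)=\sum a_k$. A root $\beta$ is moved by $r_i$ if $(\alpha_i,\beta)=\pm1$. For a set $B$ of mutually orthogonal positive roots, $wB=\Phi^+\cap\{\pm w\beta:\beta\in B\}$. A $W$-orbit $\mathcal B$ of such sets is admissible if for every $B\in\mathcal B$, all nodes $i\not\sim j$ and root $\gamma$ with $\gamma,\gamma-\alpha_i+\alpha_j\in B$, $r_iB=r_jB$. For $B,C\in\mathcal B$ write $B\prec C$ if $B\ne C$ and the minimal height of an element of $B\setminus C$ is strictly smaller than the minimal height of an element of $C\setminus B$. For admissible $\mathcal B$, the monoidal poset $(\mathcal B,<)$ is $\mathcal B$ with the partial order $<$ given by the transitive closure of $\{(B,r_jB): B\in\mathcal B,\ j\text{ a node},\ B\prec r_jB\}$; $>$ is the reverse relation. *)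

(* Defs.v *)
From HB Require Import structures.
From mathcomp Require Import all_boot all_order all_algebra.
From mathcomp Require Import finmap.
From Stdlib Require Import Relations.Relation_Operators.
Set Implicit Arguments. Unset Strict Implicit. Unset Printing Implicit Defensive.
Import GRing.Theory Num.Theory.
Local Open Scope ring_scope.
Local Open Scope fset_scope.

(* Vectors in the root lattice, written in the basis of fundamental roots:
   v = \sum_t v t * alpha_t.  Nodes 1..n are represented by 'I_n. *)
Definition vec (n : nat) := {ffun 'I_n -> int}.

(* The diagram M is given by its adjacency relation adj (i ~ j). *)
Definition simple_diagram n (adj : rel 'I_n) := symmetric adj /\ irreflexive adj.

Definition alpha n (i : 'I_n) : vec n := [ffun t => ((i == t) : nat)%:Z].

Definition cartan n (adj : rel 'I_n) (i j : 'I_n) : int :=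
  if i == j then 2 else if adj i j then -1 else 0.

Definition form n (adj : rel 'I_n) (u v : vec n) : int :=
  \sum_(i < n) \sum_(j < n) u i * v j * cartan adj i j.

Definition spherical n (adj : rel 'I_n) :=
  forall v : vec n, [exists t, v t != 0] -> 0 < form adj v v.

Definition refl n (adj : rel 'I_n) (i : 'I_n) (v : vec n) : vec n :=
  [ffun t => v t - form adj (alpha i) v * alpha i t].

Definition vneg n (v : vec n) : vec n := [ffun t => - v t].

Definition ht n (v : vec n) : int := \sum_(t < n) v t.

Inductive is_root n (adj : rel 'I_n) : vec n -> Prop :=
| root_simple i : is_root adj (alpha i)
| root_refl i b : is_root adj b -> is_root adj (refl adj i b).

(* nonnegative coordinates (a root is positive iff this holds) *)
Definition posv n (v : vec n) : bool := [forall t, 0 <= v t].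

Definition is_pos_root n (adj : rel 'I_n) (v : vec n) := is_root adj v /\ posv v.

Definition moved n (adj : rel 'I_n) (i : 'I_n) (b : vec n) : bool :=
  (form adj (alpha i) b == 1) || (form adj (alpha i) b == -1).

(* r_j B = Phi^+ \cap {+- r_j beta : beta in B}; applied to sets of roots,
   membership in Phi^+ amounts to nonnegativity of coordinates. *)
Definition act n (adj : rel 'I_n) (j : 'I_n) (B : {fset vec n}) : {fset vec n} :=
  [fset x in (refl adj j @` B) `|` ((fun b => vneg (refl adj j b)) @` B) | posv x].

Definition orth_pos_set n (adj : rel 'I_n) (B : {fset vec n}) :=
  (forall b, b \in B -> is_pos_root adj b) /\
  (forall b c, b \in B -> c \in B -> b != c -> form adj b c = 0).

(* the W-orbit of B0: W is generated by the r_j, so wB0 = r_j1 (... (r_jm B0)) *)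
Definition in_Worbit n (adj : rel 'I_n) (B0 B : {fset vec n}) :=
  exists js : seq 'I_n, B = foldr (act adj) B0 js.

Definition sub_add n (g : vec n) (i j : 'I_n) : vec n :=
  [ffun t => (g t - alpha i t + alpha j t)%R].

Definition add2 n (g : vec n) (i k : 'I_n) : vec n :=
  [ffun t => (g t + alpha i t + alpha k t)%R].

(* admissibility of the orbit of B0 ("i not~ j" includes i = j) *)
Definition admissible n (adj : rel 'I_n) (B0 : {fset vec n}) :=
  forall B, in_Worbit adj B0 B ->
  forall i j : 'I_n, ~~ adj i j ->
  forall g, g \in B -> sub_add g i j \in B -> act adj i B = act adj j B.

(* B \prec C : min height of B\C < min height of C\B (min over empty = +oo) *)
Definition prec n (B C : {fset vec n}) :=
  B != C /\ exists b, [/\ b \in B, b \notin C &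
                          forall c, c \in C -> c \notin B -> ht b < ht c].

Definition medge n (adj : rel 'I_n) (B0 : {fset vec n}) (B C : {fset vec n}) :=
  in_Worbit adj B0 B /\ exists j, C = act adj j B /\ prec B C.

Definition mlt n (adj : rel 'I_n) (B0 : {fset vec n}) : {fset vec n} -> {fset vec n} -> Prop :=
  clos_trans _ (medge adj B0).

(* Main.v *)
Require Import Defs.
From HB Require Import structures.
From mathcomp Require Import all_boot all_order all_algebra.
From mathcomp Require Import finmap.
From mathcomp Require Import zify ring.
From Stdlib Require Import Relations.Relation_Operators.
Import Order.TTheory GRing.Theory Num.Theory.
Local Open Scope ring_scope.

Section Basics.
Variables (n : nat) (adj : rel 'I_n).
Hypothesis hsym : symmetric adj.
Hypothesis hirr : irreflexive adj.

Local Notation a := (@alpha n).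
Implicit Types u v w : vec n.
Local Notation F := (Defs.form adj).

Lemma alphaE j t : a j t = if j == t then 1 else 0.
Proof. by rewrite ffunE; case: eqP. Qed.

Lemma cartanC i j : cartan adj i j = cartan adj j i.
Proof. by rewrite /cartan eq_sym hsym. Qed.

Lemma formC u v : F u v = F v u.
Proof.
rewrite /Defs.form exchange_big; apply: eq_bigr => i _; apply: eq_bigr => j _.
by rewrite cartanC; ring.
Qed.

Lemma formDr u v w : F u (v + w) = F u v + F u w.
Proof.
rewrite /Defs.form -big_split; apply: eq_bigr => i _; rewrite -big_split.
by apply: eq_bigr => j _; rewrite ffunE mulrDr mulrDl.
Qed.

Lemma formZr u v (c : int) : F u (v *~ c) = c * F u v.
Proof.
rewrite /Defs.form mulr_sumr; apply: eq_bigr => i _; rewrite mulr_sumr.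
by apply: eq_bigr => j _; rewrite ffunMzE mulrzz; ring.
Qed.

Lemma formNr u v : F u (- v) = - F u v.
Proof.
rewrite /Defs.form -sumrN; apply: eq_bigr => i _; rewrite -sumrN.
by apply: eq_bigr => j _; rewrite ffunE; ring.
Qed.

Lemma formBr u v w : F u (v - w) = F u v - F u w.
Proof. by rewrite formDr formNr. Qed.

Lemma formDl u v w : F (v + w) u = F v u + F w u.
Proof. by rewrite !(formC _ u) formDr. Qed.
Lemma formZl u v (c : int) : F (v *~ c) u = c * F v u.
Proof. by rewrite !(formC _ u) formZr. Qed.
Lemma formNl u v : F (- v) u = - F v u.
Proof. by rewrite !(formC _ u) formNr. Qed.
Lemma formBl u v w : F (v - w) u = F v u - F w u.
Proof. by rewrite formDl formNl. Qed.

Lemma form_al j v : F (a j) v = \sum_t v t * cartan adj j t.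
Proof.
rewrite /Defs.form (eq_bigr (fun i => (i == j)%:R * \sum_t v t * cartan adj i t)); last first.
  move=> i _; rewrite mulr_sumr; apply: eq_bigr => t _; rewrite alphaE eq_sym.
  by case: eqP => _ /=; ring.
rewrite (bigD1 j) //= eqxx mul1r -[RHS]addr0; congr (_ + _).
by apply: big1 => i /negbTE -> /=; rewrite mul0r.
Qed.

Lemma form_aa i j : F (a i) (a j) = cartan adj i j.
Proof.
rewrite form_al (bigD1 j) //= alphaE eqxx mul1r -[RHS]addr0; congr (_ + _).
by apply: big1 => t htj; rewrite alphaE eq_sym (negbTE htj); ring.
Qed.

Lemma form_aa2 j : F (a j) (a j) = 2.
Proof. by rewrite form_aa /cartan eqxx. Qed.

Lemma reflE j v : refl adj j v = v - a j *~ F (a j) v.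
Proof. by apply/ffunP => t; rewrite !ffunE ffunMzE mulrzz alphaE; case: (j == t) => /=; ring. Qed.

Lemma vnegE (v : vec n) : vneg v = - v.
Proof. by apply/ffunP => t; rewrite !ffunE. Qed.

Lemma refl_refl j v : refl adj j (refl adj j v) = v.
Proof.
rewrite !reflE formBr formZr form_aa2.
set c := F (a j) v.
have -> : c - c * 2 = - c by ring.
by rewrite mulrNz opprK subrK.
Qed.

Lemma refl_iso j u v : F (refl adj j u) (refl adj j v) = F u v.
Proof.
rewrite !reflE !formBr !formBl !formZr !formZl form_aa2 (formC u (a j)).
ring.
Qed.

Lemma refl_a j : refl adj j (a j) = - a j.
Proof.
rewrite reflE form_aa2. apply/ffunP => t; rewrite !ffunE; ring.
Qed.

Lemma htD u v : ht (u + v) = ht u + ht v.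
Proof. by rewrite /ht -big_split; apply: eq_bigr => t _; rewrite ffunE. Qed.
Lemma htN u : ht (- u) = - ht u.
Proof. by rewrite /ht -sumrN; apply: eq_bigr => t _; rewrite ffunE. Qed.
Lemma htZ u (c : int) : ht (u *~ c) = c * ht u.
Proof. by rewrite /ht mulr_sumr; apply: eq_bigr => t _; rewrite ffunMzE mulrzz mulrC. Qed.
Lemma ht_a j : ht (a j) = 1.
Proof.
rewrite /ht (bigD1 j) //= alphaE eqxx -[RHS]addr0; congr (_ + _).
by apply: big1 => t htj; rewrite alphaE eq_sym (negbTE htj).
Qed.

Lemma vecP0 (w : vec n) : w != 0 -> [exists t, w t != 0].
Proof.
move=> hw; apply: contraR hw => /existsPn h; apply/eqP/ffunP => t.
by rewrite ffunE; apply/eqP; move: (h t); rewrite negbK.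
Qed.


Lemma vaddE u w t : (u + w) t = (u t + w t)%R :> int.
Proof. by rewrite ffunE. Qed.
Lemma voppE u t : (- u) t = (- u t)%R :> int.
Proof. by rewrite ffunE. Qed.
Lemma vsubE u w t : (u - w) t = (u t - w t)%R :> int.
Proof. by rewrite vaddE voppE. Qed.
Lemma vmulzE u (c : int) t : (u *~ c) t = (c * u t)%R :> int.
Proof. by rewrite ffunMzE mulrzz mulrC. Qed.
Lemma v0E (t : 'I_n) : (0%R : vec n) t = 0%R :> int.
Proof. by rewrite ffunE. Qed.

Lemma posv_a j : posv (a j).
Proof. by apply/forallP => t; rewrite alphaE; case: eqP. Qed.

Lemma not_posv_na j : ~~ posv (- a j).
Proof. by apply/negP => /forallP /(_ j); rewrite ffunE alphaE eqxx. Qed.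

Lemma posv_neg {w} : posv w -> posv (- w) -> w = 0.
Proof.
move=> /forallP h1 /forallP h2; apply/ffunP => t; rewrite ffunE.
have := h1 t; have := h2 t; rewrite !ffunE => a1 a2; apply/eqP; by rewrite Order.POrderTheory.eq_le -oppr_ge0 a1 a2.
Qed.

Lemma form00 : F 0 0 = 0.
Proof. by rewrite -[X in F _ X](mulr0z (0 : vec n)) formZr mul0r. Qed.

Hypothesis hsph : spherical adj.

Lemma c_range {v j} : posv v -> F v v = 2 -> v != a j -> -1 <= F (a j) v <= 1.
Proof.
move=> pv nv hne.
have h1 : 0 < F (v - a j) (v - a j).
  by apply: hsph; apply: vecP0; rewrite subr_eq0.
have h2 : 0 < F (v + a j) (v + a j).
  apply: hsph; apply/existsP; exists j; rewrite vaddE alphaE eqxx.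
  have := forallP pv j; move=> hh; apply/eqP; lia.
move: h1 h2; rewrite !formBr !formBl !formDr !formDl form_aa2 nv (formC v (a j)).
lia.
Qed.

Lemma refl_posv {v j} : posv v -> F v v = 2 -> v != a j -> posv (refl adj j v).
Proof.
move=> pv nv hne; have /andP[lo hi] := c_range pv nv hne.
apply/forallP => t; rewrite reflE vsubE vmulzE alphaE.
have vt := forallP pv t.
case: eqP => [<-|_]; last by lia.
suff : F (a j) v <= 0 \/ 1 <= v j by have := forallP pv j; lia.
case: (ltrP 0 (v j)) => hvj; [right; lia | left].
rewrite form_al; apply: sumr_le0 => s _.
case: (eqVneq j s) => [<-|hjs].
  rewrite /cartan eqxx; have := forallP pv j; lia.
rewrite /cartan (negbTE hjs); case: (adj j s); have := forallP pv s; lia.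
Qed.

Lemma refl_ne0 {v} j : F v v = 2 -> refl adj j v != 0.
Proof.
move=> nv; apply/eqP => h; have := refl_iso j v v; rewrite h form00 nv => //.
Qed.

Definition rho j v := if v == a j then v else refl adj j v.

Definition Pset (B : {fset vec n}) :=
  (forall b, b \in B -> posv b /\ F b b = 2) /\
  (forall b c, b \in B -> c \in B -> b != c -> F b c = 0).

Lemma act_char B j x : Pset B ->
  reflect (exists2 g, g \in B & x = rho j g) (x \in act adj j B).
Proof.
move=> [PB OB]; apply: (iffP idP).
  rewrite /act !inE => /andP [/orP [/imfsetP [g hg ->] | /imfsetP [g hg ->]] px].
    case: (eqVneq g (a j)) => [eg|ne].
      by move: px; rewrite eg refl_a (negbTE (not_posv_na j)).
    by exists g => //; rewrite /rho (negbTE ne).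
  case: (eqVneq g (a j)) => [eg|ne].
    by exists g => //; rewrite /rho eg eqxx vnegE refl_a opprK.
  have [pg ng] := PB g hg.
  have := posv_neg (refl_posv pg ng ne); rewrite -vnegE => /(_ px) /eqP.
  by rewrite (negbTE (refl_ne0 j ng)).
move=> [g hg ->]; rewrite /act !inE /rho.
have [pg ng] := PB g hg.
case: (eqVneq g (a j)) => [eg|ne].
  rewrite eg posv_a andbT; apply/orP; right; apply/imfsetP; exists (a j).
    by rewrite -eg.
  by rewrite vnegE refl_a opprK.
rewrite refl_posv // andbT; apply/orP; left; apply/imfsetP; by exists g.
Qed.


Lemma rho_posv g j : posv g -> F g g = 2 -> posv (rho j g).
Proof.
move=> pg ng; rewrite /rho; case: (eqVneq g (a j)) => [_|ne] //.
exact: refl_posv.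
Qed.

Lemma rho_norm g j : F g g = 2 -> F (rho j g) (rho j g) = 2.
Proof. by move=> ng; rewrite /rho; case: (eqVneq g (a j)) => [_|ne] //; rewrite refl_iso. Qed.

Lemma Pset_act B j : Pset B -> Pset (act adj j B).
Proof.
move=> PB; have [P1 OB] := PB; split.
  move=> x /(act_char _ _ _ PB) [g hg ->]; have [pg ng] := P1 g hg.
  by split; [exact: rho_posv | exact: rho_norm].
move=> x y /(act_char _ _ _ PB) [g hg ->] /(act_char _ _ _ PB) [h hh ->] hne.
have gh : g != h by apply: contraNneq hne => ->.
have o := OB g h hg hh gh.
rewrite /rho; case: (eqVneq g (a j)) => [eg|ng']; case: (eqVneq h (a j)) => [eh|nh'].
- by move: gh; rewrite eg eh eqxx.
- rewrite eg in o *; rewrite reflE formBr formZr form_aa2 o; ring.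
- rewrite eh in o *; rewrite reflE formBl formZl form_aa2 (formC (a j) g) o; ring.
- by rewrite refl_iso.
Qed.

Lemma rho_rho g j : posv g -> F g g = 2 -> rho j (rho j g) = g.
Proof.
move=> pg ng; rewrite /rho; case: (eqVneq g (a j)) => [eg|ne].
  by rewrite eg eqxx.
have -> : (refl adj j g == a j) = false.
  apply/negP => /eqP e; have := refl_refl j g; rewrite e refl_a => eg.
  by move: pg; rewrite -eg (negbTE (not_posv_na j)).
exact: refl_refl.
Qed.

Lemma act_invol B j : Pset B -> act adj j (act adj j B) = B.
Proof.
move=> PB; have PB' := Pset_act _ j PB.
apply/fsetP => x; apply/idP/idP => hx.
  case/(act_char _ _ _ PB'): hx => g /(act_char _ _ _ PB) [h hh ->] ->.
  by have [ph nh] := PB.1 h hh; rewrite rho_rho.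
apply/(act_char _ _ _ PB'); exists (rho j x).
  by apply/(act_char _ _ _ PB); exists x.
by have [ph nh] := PB.1 x hx; rewrite rho_rho.
Qed.

Lemma root_norm b : is_root adj b -> F b b = 2.
Proof. by elim=> [i|i c _ IH]; [exact: form_aa2 | rewrite refl_iso]. Qed.

Lemma Pset_orbit B0 B : orth_pos_set adj B0 -> in_Worbit adj B0 B -> Pset B.
Proof.
move=> [hr ho] [js ->]; elim: js => [|j js IH] /=; last exact: Pset_act.
split=> //; move=> b hb; have [r p] := hr b hb; split=> //; exact: root_norm.
Qed.


Lemma exmin (s : seq (vec n)) (P : pred (vec n)) :
  (exists x, x \in s /\ P x) ->
  exists x, [/\ x \in s, P x & forall y, y \in s -> P y -> ht x <= ht y].
Proof.
elim: s => [|z s IH] [x [hx px]]; first by rewrite in_nil in hx.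
case: (boolP (has P s)) => [/hasP [y ys py] | hs].
  have [m [ms pm mm]] := IH (ex_intro _ y (conj ys py)).
  case: (boolP (P z && (ht z < ht m))) => [/andP [pz lt] | hz].
    exists z; split => //; first by rewrite inE eqxx.
    move=> w; rewrite inE => /orP [/eqP -> _ // | ws pw].
    by have := mm w ws pw; apply: le_trans; apply: ltW.
  exists m; split => //; first by rewrite inE ms orbT.
  move=> w; rewrite inE => /orP [/eqP -> pw | ws pw]; last exact: mm.
  by move: hz; rewrite pw /= -leNgt.
have ez : x = z.
  move: hx; rewrite inE => /orP [/eqP // | xs].
  by move: hs => /hasP; case; exists x.
exists z; split; [by rewrite inE eqxx | by rewrite -ez |].
move=> w; rewrite inE => /orP [/eqP -> _ // | ws pw].
by move: hs => /hasP; case; exists w.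
Qed.

Definition lexr (S T : {fset vec n}) := exists h : int,
  [/\ forall x, ht x < h -> (x \in S) = (x \in T),
      forall x, ht x = h -> x \in T -> x \in S &
      exists x, [/\ ht x = h, x \in S & x \notin T]].

Lemma lexr_irr S : ~ lexr S S.
Proof. by case=> h [_ _ [x [_ h1 h2]]]; rewrite h1 in h2. Qed.

Lemma lexr_trans S T U : lexr S T -> lexr T U -> lexr S U.
Proof.
move=> [h1 [A1 B1 [x1 [e1 s1 t1]]]] [h2 [A2 B2 [x2 [e2 s2 t2]]]].
case: (ltgtP h1 h2) => c.
- exists h1; split.
  + by move=> x hx; rewrite (A1 _ hx) A2 // (lt_trans hx c).
  + by move=> x hx xu; apply: B1 => //; rewrite A2 ?hx.
  + by exists x1; split=> //; rewrite -A2 // e1.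
- exists h2; split.
  + by move=> x hx; rewrite A1 ?(lt_trans hx c) // A2.
  + by move=> x hx xu; rewrite A1 ?hx //; apply: B2.
  + by exists x2; split=> //; rewrite A1 // e2.
- exists h1; split.
  + by move=> x hx; rewrite A1 // A2 // -c.
  + by move=> x hx xu; apply: B1 => //; apply: B2 => //; rewrite hx.
  + exists x1; split=> //; apply/negP => xu.
    by move: t1; rewrite (B2 x1) // -c.
Qed.

Lemma prec_lexr S T : prec S T -> lexr S T.
Proof.
move=> [ne [b [bS bT hb]]].
have [m [mS mP mm]] := @exmin (enum_fset S) [pred x | x \notin T]
   (ex_intro _ b (conj bS bT)).
have hmb : ht m <= ht b := mm b bS bT.
exists (ht m); split.
- move=> x hx; case: (boolP (x \in S)) => xS; case: (boolP (x \in T)) => xT //.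
    by have := mm x xS xT; rewrite leNgt hx.
  have := hb x xT xS => hbx.
  by move: hx; rewrite ltNge (le_trans hmb (ltW hbx)).
- move=> x hx xT; apply/negPn/negP => xS.
  by have := hb x xT xS; rewrite hx ltNge hmb.
- by exists m; split.
Qed.

Lemma mlt_lexr B0 S T : mlt adj B0 S T -> lexr S T.
Proof.
elim => [x y [_ [j [_ p]]] | x y z _ IH1 _ IH2]; first exact: prec_lexr.
exact: lexr_trans IH1 IH2.
Qed.

Lemma notprec B0 B C : mlt adj B0 B C -> in_Worbit adj B0 C ->
  (exists j, B = act adj j C) -> ~ prec C B.
Proof.
move=> hlt hC [j hj] p.
have : mlt adj B0 B B.
  apply: (t_trans _ _ B C B hlt); apply: t_step; split=> //; exists j; split=> //.
by move/mlt_lexr; apply: lexr_irr.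
Qed.


Lemma add2E beta i k : add2 beta i k = beta + a i + a k.
Proof. by apply/ffunP => t; rewrite !ffunE. Qed.

Lemma core i k (hik : i != k) B (PB : Pset B)
  (hCk : act adj i B = act adj k B) (np : ~ prec (act adj i B) B)
  beta (hb : beta \in B) (hm : moved adj i beta)
  (hmin : forall g, g \in B -> moved adj i g || moved adj k g -> ht beta <= ht g) :
  add2 beta i k \in B /\ ~~ adj i k.
Proof.
have [pb nb] := PB.1 beta hb.
have notmoved : forall b, b \in B -> ~~ moved adj i b -> b \in act adj i B.
  move=> b bB nm; apply/(act_char _ _ _ PB); exists b => //.
  rewrite /rho; case: eqVneq => [//|ne].
  have [pb' nb'] := PB.1 b bB.
  move: nm (c_range pb' nb' ne); rewrite /moved => /norP [/eqP n1 /eqP n2] /andP [lo hi].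
  have c0 : F (a i) b = 0 by lia.
  by rewrite reflE c0 mulr0z subr0.
have down : forall j, act adj i B = act adj j B -> F (a j) beta = 1 -> False.
  move=> j hj c1.
  have bne : beta != a j by apply/eqP => e; move: c1; rewrite e form_aa2.
  have xC : beta - a j \in act adj i B.
    rewrite hj; apply/(act_char _ _ _ PB); exists beta => //.
    by rewrite /rho (negbTE bne) reflE c1 mulr1z.
  have xB : beta - a j \notin B.
    apply/negP => xB.
    have ne : beta != beta - a j.
      apply/eqP => e; have := congr1 (fun v => v j) e.
      rewrite /= vsubE alphaE eqxx; lia.
    have := PB.2 _ _ hb xB ne.
    by rewrite formBr (formC beta (a j)) c1 nb.
  apply: np; split.
    by apply/negP => /eqP e; move: xB; rewrite -e xC.
  exists (beta - a j); split => //.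
  move=> c cB cC.
  have mc : moved adj i c by apply/negPn/negP => nm; have := notmoved c cB nm; rewrite (negbTE cC).
  have := hmin c cB; rewrite mc => /(_ erefl).
  rewrite htD htN ht_a; lia.
move: hm; rewrite /moved => /orP [/eqP s1 | /eqP sm1].
  by exfalso; exact: (down i erefl s1).
have bne : beta != a i by apply/eqP => e; move: sm1; rewrite e form_aa2.
have xC : beta + a i \in act adj k B.
  rewrite -hCk; apply/(act_char _ _ _ PB); exists beta => //.
  by rewrite /rho (negbTE bne) reflE sm1 mulrN1z opprK.
have hki : (k == i) = false by apply/negP => /eqP e; move: hik; rewrite e eqxx.
case/(act_char _ _ _ PB): xC => g gB.
rewrite /rho; case: (eqVneq g (a k)) => [eg | ngk] e.
  have := congr1 (fun v => v i) e; rewrite eg /= vaddE !alphaE eqxx hki.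
  have := forallP pb i; lia.
have [pg ng] := PB.1 g gB.
have /andP [lo hi] := c_range pg ng ngk.
have eg : g = beta + a i + a k *~ F (a k) g by rewrite e reflE subrK.
have gne : beta != g.
  apply/eqP => h; have := congr1 (fun v => v i) eg.
  rewrite -h /= !vaddE vmulzE !alphaE eqxx hki; lia.
have orth := PB.2 _ _ hb gB gne.
have dg := erefl (F (a k) g).
rewrite {2}eg !formDr formZr form_aa form_aa2 in dg.
rewrite eg !formDr formZr (formC beta (a i)) (formC beta (a k)) sm1 nb in orth.
move: dg orth; rewrite /cartan hki.
set d := F (a k) g; set ck := F (a k) beta.
have : d = -1 \/ d = 0 \/ d = 1 by lia.
case: (boolP (adj k i)) => hadj.
  case=> [->|[->|->]]; lia.
have hadj' : ~~ adj i k by rewrite hsym.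
case=> [d1|[d0|d1]].
  rewrite d1 => dg orth.
  have ck1 : ck = 1 by lia.
  by exfalso; exact: (down k hCk ck1).
  rewrite d0; lia.
move=> _ _; split => //.
by rewrite add2E -[X in _ + X]mulr1z -d1 -eg.
Qed.

Lemma main (B0 : {fset vec n}) (hB0 : orth_pos_set adj B0)
  (B : {fset vec n}) (hB : in_Worbit adj B0 B)
  (i k : 'I_n) (hik : i != k)
  (heq : act adj i B = act adj k B)
  (hlt : mlt adj B0 B (act adj i B))
  (beta : vec n) (hbeta : beta \in B)
  (hmov : moved adj i beta || moved adj k beta)
  (hmin : forall g, g \in B -> moved adj i g || moved adj k g -> ht beta <= ht g) :
  add2 beta i k \in B /\ ~~ adj i k.
Proof.
have PB := Pset_orbit B0 B hB0 hB.
have hCw : in_Worbit adj B0 (act adj i B).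
  by case: hB => js ->; exists (i :: js).
have np : ~ prec (act adj i B) B.
  apply: (notprec _ _ _ hlt hCw); exists i; by rewrite act_invol.
move: hmov => /orP [mi | mk].
  exact: (core _ _ hik _ PB heq np _ hbeta mi hmin).
have hki : k != i by rewrite eq_sym.
have := core _ _ hki _ PB (esym heq) _ _ hbeta mk.
rewrite -heq => /(_ np) [].
  by move=> g gB; rewrite orbC; apply: hmin.
move=> h1 h2; split; last by rewrite hsym.
by move: h1; rewrite !add2E addrAC.
Qed.

End Basics.

Local Open Scope fset_scope.

Theorem lemma3p3 (n : nat) (adj : rel 'I_n)
  (hM : simple_diagram adj) (hsph : spherical adj)
  (B0 : {fset vec n}) (hB0 : orth_pos_set adj B0) (hadm : admissible adj B0)
  (B : {fset vec n}) (hB : in_Worbit adj B0 B)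
  (i k : 'I_n) (hik : i != k)
  (heq : act adj i B = act adj k B)
  (hlt : mlt adj B0 B (act adj i B))
  (beta : vec n) (hbeta : beta \in B)
  (hmov : moved adj i beta || moved adj k beta)
  (hmin : forall g, g \in B -> moved adj i g || moved adj k g -> ht beta <= ht g) :
  add2 beta i k \in B /\ ~~ adj i k.
Proof.
case: hM => hsym hirr.
by apply: main; eauto.
Qed.
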